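(* Let $\mathcal{T}$ be a trim transducer with a single initial state. Then $\mathcal{W}(\mathcal{T})$ and $\mathcal{T}$ are equivalent, i.e. $[\![\mathcal{W}(\mathcal{T})]\!]=[\![\mathcal{T}]\!]$. Moreover, if $\mathcal{T}$ satisfies the weak twinning property, then $\mathcal{W}(\mathcal{T})$ is finite, and it is a multi-transducer.
   Context: $\mathcal{T}=(Q,E,I,F,f)$ is a transducer: finite state set $Q$, initial states $I$, final states $F$, transitions $E\subseteq Q\times\Sigma\times\Gamma^*\times Q$, final output $f:F\to\Gamma^*$; it realises $[\![\mathcal{T}]\!]=\{(u,wf(t)) : i\xrightarrow{u\mid w}t,\ i\in I,\ t\in F\}$ where $i\xrightarrow{u\mid w}t$ is a run reading $u$ and outputting $w$; trim means every state lies on a run from an initial to a final state. A multi-transducer is like a transducer except that the final output function maps final states to finite sets of words, and it realises $\{(u,wx): i\xrightarrow{u\mid w}t,\ x\in f(t)\}$ (possibly with infinitely many states). Determinisation $\bar{\mathcal{D}}(\mathcal{T})$: its states are the finite subsets $U$ of $Q\times\Gamma^*$. For such $U$ and $\sigma\in\Sigma$, let $R_{U,\sigma}=\{(q,uv) : (p,u)\in U,\ (p,\sigma,v,q)\in E\}$, let $w_{U,\sigma}$ be the longest common prefix of the words $\{w : (q,w)\in R_{U,\sigma}\text{ for some }q\}$ (taken to be $\epsilon$ if this set is empty), and $P_{U,\sigma}=\{(q,w) : (q,w_{U,\sigma}w)\in R_{U,\sigma}\}$. The transitions of $\bar{\mathcal{D}}(\mathcal{T})$ are $(U,\sigma,w_{U,\sigma},P_{U,\sigma})$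 for all $U,\sigma$; the initial state is $U_0=I\times\{\epsilon\}$; final states are the $U$ with $U\cap(F\times\Gamma^* )\neq\emptyset$, with final output set $\{wf(q) : q\in F,\ (q,w)\in U\}$. Rank: $n_U$ is the set of strongly connected components of $\mathcal{T}$ reachable from the states $q$ with $(q,w)\in U$ for some $w$. $\bar{\mathcal{W}}(\mathcal{T})$ is obtained from $\bar{\mathcal{D}}(\mathcal{T})$ by removing every transition $(U,\sigma,v,U')$ with $n_{U'}\subsetneq n_U$ and replacing it by the transitions $(U,\sigma,vw,\{(q,\epsilon)\})$ for all $(q,w)\in U'$. The weak determinisation $\mathcal{W}(\mathcal{T})$ is the trim part of $\bar{\mathcal{W}}(\mathcal{T})$ (restriction to states lying on some run from the initial state to a final state). $\Delta(v,w)=v^{-1}w$ in the free group over $\Gamma$. $\mathcal{T}$ satisfies the weak twinning property if for all states $q_1,q_2$, all $u,v\in\Sigma^*$ and $u_1,u_2,v_1,v_2\in\Gamma^*$ with $q_1\xrightarrow{u\mid u_1}q_1$, $q_1\xrightarrow{v\mid v_1}q_1$, $q_1\xrightarrow{u\mid u_2}q_2$, $q_2\xrightarrow{v\mid v_2}q_2$, one has $\Delta(u_1,u_2)=\Delta(u_1v_1,u_2v_2)$. *)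

(* Defs.v *)
From HB Require Import structures.
From mathcomp Require Import all_boot finmap.
Set Implicit Arguments.
Unset Strict Implicit.
Unset Printing Implicit Defensive.
Local Open Scope fset_scope.

(* The final output f is a total function, only used on F.             *)
Record transducer (Q Sigma Gamma : finType) := Transducer {
  tE : seq (Q * Sigma * seq Gamma * Q);
  tI : {set Q};
  tF : {set Q};
  tf : Q -> seq Gamma }.

Section Transducer.
Variables (Q Sigma Gamma : finType) (T : transducer Q Sigma Gamma).

Inductive run : Q -> seq Sigma -> seq Gamma -> Q -> Prop :=
| run_nil p : run p [::] [::] p
| run_cons p a v q u w r :
    (p, a, v, q) \in tE T -> run q u w r -> run p (a :: u) (v ++ w) r.

Definition realises (u : seq Sigma) (out : seq Gamma) : Prop :=
  exists i t w, [/\ i \in tI T, t \in tF T, run i u w t & out = w ++ tf T t].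

Definition is_trim : Prop :=
  forall q : Q, exists i t u1 w1 u2 w2,
    [/\ i \in tI T, t \in tF T, run i u1 w1 q & run q u2 w2 t].

(* Free group over Γ: elements are freely reduced words over the letters
   Γ × bool ((a,true) = a, (a,false) = a^{-1}); [fg_reduce] computes the
   (unique) freely reduced word representing a word, so two words are equal
   in the free group iff their reductions coincide. *)
Definition fg_letter := (Gamma * bool)%type.
Definition fg_of (w : seq Gamma) : seq fg_letter := map (fun a => (a, true)) w.
Definition fg_inv (s : seq fg_letter) : seq fg_letter :=
  rev (map (fun x => (x.1, ~~ x.2)) s).
Definition fg_reduce (s : seq fg_letter) : seq fg_letter :=
  foldr (fun x acc => match acc with
                      | y :: acc' => if (y.1 == x.1) && (y.2 == ~~ x.2) then acc'
                                     else x :: acc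
                      | [::] => [:: x]
                      end) [::] s.
Definition Delta (v w : seq Gamma) : seq fg_letter :=
  fg_reduce (fg_inv (fg_of v) ++ fg_of w).

Definition weak_twinning : Prop :=
  forall (q1 q2 : Q) (u v : seq Sigma) (u1 u2 v1 v2 : seq Gamma),
    run q1 u u1 q1 -> run q1 v v1 q1 -> run q1 u u2 q2 -> run q2 v v2 q2 ->
    Delta u1 u2 = Delta (u1 ++ v1) (u2 ++ v2).

Definition tedge : rel Q := fun p q => has (fun e => (e.1.1.1 == p) && (e.2 == q)) (tE T).
Definition scc (q : Q) : {set Q} := [set r | connect tedge q r && connect tedge r q].

Definition dstate := {fset (Q * seq Gamma)}.

Fixpoint lcp2 (v w : seq Gamma) : seq Gamma :=
  match v, w with
  | a :: v', b :: w' => if a == b then a :: lcp2 v' w' else [::]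
  | _, _ => [::]
  end.
Definition lcp (ws : seq (seq Gamma)) : seq Gamma :=
  match ws with [::] => [::] | w :: ws' => foldl lcp2 w ws' end.

Definition rank (U : dstate) : {set {set Q}} :=
  [set scc r | r in [set r : Q | [exists x : U, connect tedge (val x).1 r]]].

Definition R_ (U : dstate) (s : Sigma) : dstate :=
  [fset x | x in [seq (e.2, pu.2 ++ e.1.2)
                  | pu <- enum_fset U,
                    e <- [seq e <- tE T | (e.1.1.1 == pu.1) && (e.1.1.2 == s)]]].
Definition w_ (U : dstate) (s : Sigma) : seq Gamma :=
  lcp [seq x.2 | x <- enum_fset (R_ U s)].
Definition P_ (U : dstate) (s : Sigma) : dstate :=
  [fset (x.1, drop (size (w_ U s)) x.2) | x in R_ U s & prefix (w_ U s) x.2].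

Definition U0 : dstate := [fset x | x in [seq (i, [::] : seq Gamma) | i <- enum (tI T)]].
Definition dfinal (U : dstate) : bool := has (fun x => x.1 \in tF T) (enum_fset U).
Definition dout (U : dstate) : seq (seq Gamma) :=
  [seq x.2 ++ tf T x.1 | x <- enum_fset U & x.1 \in tF T].

Definition Dbar_trans (U : dstate) (s : Sigma) (v : seq Gamma) (U' : dstate) : Prop :=
  v = w_ U s /\ U' = P_ U s.

Definition Wbar_trans (U : dstate) (s : Sigma) (v : seq Gamma) (U'' : dstate) : Prop :=
  exists U', Dbar_trans U s (w_ U s) U' /\
  (if rank U' \proper rank U then
     exists q w, [/\ (q, w) \in U', v = w_ U s ++ w & U'' = [fset (q, [::] : seq Gamma)]]
   else v = w_ U s /\ U'' = U').
End Transducer.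

(* Multi-transducers, with possibly infinitely many states: a state    *)
(* predicate mQ over a type S, a transition relation, initial states,  *)
(* final states, and a finite set (list) of final outputs per state.   *)
Record mtransducer (S : Type) (Sigma Gamma : Type) := MTransducer {
  mQ : S -> Prop;
  mE : S -> Sigma -> seq Gamma -> S -> Prop;
  mI : S -> Prop;
  mF : S -> Prop;
  mf : S -> seq (seq Gamma) }.

Section MTransducer.
Variables (S : Type) (Sigma Gamma : eqType) (M : mtransducer S Sigma Gamma).

Inductive mrun : S -> seq Sigma -> seq Gamma -> S -> Prop :=
| mrun_nil p : mQ M p -> mrun p [::] [::] p
| mrun_cons p a v q u w r :
    mQ M p -> mE M p a v q -> mrun q u w r -> mrun p (a :: u) (v ++ w) r.

Definition mrealises (u : seq Sigma) (out : seq Gamma) : Prop :=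
  exists i t w x, [/\ mI M i, mF M t, mrun i u w t, x \in mf M t & out = w ++ x].

Definition mtrim_state (q : S) : Prop :=
  exists i t u1 w1 u2 w2, [/\ mI M i, mF M t, mrun i u1 w1 q & mrun q u2 w2 t].

Definition mtrim : mtransducer S Sigma Gamma :=
  {| mQ := mtrim_state;
     mE := fun p a v q => [/\ mtrim_state p, mtrim_state q & mE M p a v q];
     mI := fun q => mI M q /\ mtrim_state q;
     mF := fun q => mF M q /\ mtrim_state q;
     mf := mf M |}.
End MTransducer.

Definition mfinite (S Sigma Gamma : eqType) (M : mtransducer S Sigma Gamma) : Prop :=
  exists (sQ : seq S) (sE : seq (S * Sigma * seq Gamma * S)),
    (forall q, mQ M q -> q \in sQ) /\
    (forall p a v q, mE M p a v q -> (p, a, v, q) \in sE).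

Section W.
Variables (Q Sigma Gamma : finType) (T : transducer Q Sigma Gamma).

Definition Wbar : mtransducer (dstate Q Gamma) Sigma Gamma :=
  {| mQ := fun _ => True;
     mE := @Wbar_trans Q Sigma Gamma T;
     mI := fun U => U = U0 T;
     mF := fun U => dfinal T U;
     mf := dout T |}.

Definition W : mtransducer (dstate Q Gamma) Sigma Gamma := mtrim Wbar.
End W.

(* Main.v *)
Require Import Defs.
From mathcomp Require Import all_boot finmap zify.
Set Implicit Arguments. Unset Strict Implicit. Unset Printing Implicit Defensive.

Section FG.
Variable Gamma : finType.
Notation L := (Gamma * bool)%type.
Definition cnc (x y : L) := (y.1 == x.1) && (y.2 == ~~ x.2).
Definition fstep (x : L) (acc : seq L) : seq L :=
  match acc with
  | y :: acc' => if (y.1 == x.1) && (y.2 == ~~ x.2) then acc' else x :: acc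
  | [::] => [:: x]
  end.
Definition RR (y c : seq L) := foldr fstep c y.
Lemma reduceE (s : seq L) : fg_reduce s = RR s [::].
Proof. by []. Qed.

Fixpoint red (s : seq L) : bool :=
  match s with
  | x :: ((y :: _) as s') => ~~ cnc x y && red s'
  | _ => true
  end.
Definition i1 (x : L) : L := (x.1, ~~ x.2).

Lemma red_behead x s : red (x :: s) -> red s.
Proof. by case: s => //= y s /andP[]. Qed.

Lemma fstep_red x s : red s -> red (fstep x s).
Proof.
case: s => [|y s] //= H. case: ifP => C.
  exact: red_behead H.
by rewrite /= /cnc C H.
Qed.

Lemma RR_red y c : red c -> red (RR y c).
Proof. elim: y => //= x y IH H; exact: fstep_red (IH H). Qed.

Lemma fstep_inv x e : red e -> fstep x (fstep (i1 x) e) = e.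
Proof.
case: e => [|z e] /=; first by rewrite /i1 /= !eqxx.
case: ifP => C.
  case/andP: C => /eqP E1 /eqP E2.
  have Ez : z = x by case: z E1 E2 => a b /= -> ->; rewrite negbK; case: x.
  subst z.
  case: e => [|z' e] //=.
  move=> /andP[Hc _]; move: Hc; rewrite /cnc.
  by case: ifP.
by move=> _; rewrite /i1 /= !eqxx.
Qed.

Lemma RR_cat y y' c : RR (y ++ y') c = RR y (RR y' c).
Proof. by rewrite /RR foldr_cat. Qed.

Lemma RR_fstep x d c : red c -> RR (fstep x d) c = fstep x (RR d c).
Proof.
move=> Hc; case: d => [|y d] //=.
case: ifP => C //=.
case/andP: C => /eqP E1 /eqP E2.
have -> : y = i1 x by case: y E1 E2 => a b /= -> ->.
by rewrite fstep_inv // RR_red.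
Qed.

Lemma RR_RR y c : red c -> RR (RR y [::]) c = RR y c.
Proof. move=> Hc; elim: y => //= x y IH; by rewrite RR_fstep // IH. Qed.

Lemma i1K x : i1 (i1 x) = x.
Proof. by case: x => a b; rewrite /i1 /= negbK. Qed.

Lemma inv_cons x s : fg_inv (x :: s) = rcons (fg_inv s) (i1 x).
Proof. by rewrite /fg_inv map_cons rev_cons. Qed.

Lemma RR_rcons A b c : RR (rcons A b) c = RR A (fstep b c).
Proof. by rewrite -cats1 RR_cat. Qed.

Lemma RR_inv s c : red c -> RR (fg_inv s) (RR s c) = c.
Proof.
move=> Hc; elim: s => //= x s IH.
rewrite inv_cons RR_rcons.
have := fstep_inv (i1 x) (RR_red s Hc); rewrite i1K => ->; exact: IH.
Qed.

Lemma inv_cat (s t : seq L) : fg_inv (s ++ t) = fg_inv t ++ fg_inv s.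
Proof. by rewrite /fg_inv map_cat rev_cat. Qed.

Lemma of_cat (s t : seq Gamma) : fg_of (s ++ t) = fg_of s ++ fg_of t.
Proof. by rewrite /fg_of map_cat. Qed.

Lemma RR_of (b : seq Gamma) : RR (fg_of b) [::] = fg_of b.
Proof.
elim: b => //= a b ->. by case: b => //= c b; rewrite andbF.
Qed.

Lemma red_of (b : seq Gamma) : red (fg_of b).
Proof. by rewrite -RR_of RR_red. Qed.

Lemma DeltaE (a b : seq Gamma) : Delta a b = RR (fg_inv (fg_of a)) (fg_of b).
Proof. by rewrite /Delta reduceE RR_cat RR_of. Qed.

Lemma Delta_pre (o a b : seq Gamma) : Delta (o ++ a) (o ++ b) = Delta a b.
Proof.
rewrite !DeltaE of_cat inv_cat RR_cat.
have -> : fg_of (o ++ b) = RR (fg_of o) (fg_of b) by rewrite -(RR_of (o ++ b)) of_cat RR_cat RR_of.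
by rewrite RR_inv ?red_of.
Qed.

Lemma Delta_suf (a b a' b' s t : seq Gamma) : Delta a b = Delta a' b' ->
  Delta (a ++ s) (b ++ t) = Delta (a' ++ s) (b' ++ t).
Proof.
rewrite /Delta !reduceE => E.
rewrite !of_cat !inv_cat -!catA !RR_cat.
rewrite -(RR_cat (fg_inv (fg_of a))) -(RR_cat (fg_inv (fg_of a'))).
rewrite -(RR_RR (fg_inv (fg_of a) ++ fg_of b)) ?RR_red ?RR_of ?red_of // E.
by rewrite RR_RR ?RR_of ?red_of.
Qed.

Lemma size_fstep x c : size (fstep x c) <= (size c).+1 /\ size c <= (size (fstep x c)).+1.
Proof. case: c => [|y c] //=; case: ifP => _ //=; split => //; exact: leqW. Qed.

Lemma size_RR_le y c : size (RR y c) <= size y + size c.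
Proof. elim: y => [|x y IH] //=. case: (size_fstep x (RR y c)) => H _. apply: leq_trans H _; by rewrite addSn ltnS. Qed.

Lemma size_RR_ge y c : size c <= size (RR y c) + size y.
Proof.
elim: y => [|x y IH] /=; first by rewrite addn0. case: (size_fstep x (RR y c)) => _ H.
rewrite addnS -addSn; apply: leq_trans IH _; by rewrite leq_add2r.
Qed.

Lemma size_Delta_le (a b : seq Gamma) : size (Delta a b) <= size a + size b.
Proof.
rewrite DeltaE. apply: leq_trans (size_RR_le _ _) _.
by rewrite /fg_inv /fg_of size_rev !size_map.
Qed.

Lemma size_Delta_ge (a b : seq Gamma) : size b <= size (Delta a b) + size a.
Proof.
rewrite DeltaE. have := size_RR_ge (fg_inv (fg_of a)) (fg_of b).
by rewrite /fg_inv /fg_of size_rev !size_map.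
Qed.

Lemma RR_neg A h acc : all (fun z : L => ~~ z.2) A -> ~~ h.2 -> RR A (h :: acc) = A ++ h :: acc.
Proof.
move=> HA Hh; elim: A HA => //= z A IH /andP[Hz HA]; rewrite IH //.
have [b [B' [E Hb]]] : exists b B', A ++ h :: acc = b :: B' /\ ~~ b.2.
  case: A HA {IH} => [|b A] /=; first by exists h, acc.
  by case/andP => Hb _; exists b, (A ++ h :: acc).
rewrite E /=. case: b Hb {E} => b1 [] //= _; by case: z Hz => z1 [] //= _; rewrite andbF.
Qed.

Lemma size_Delta_ex (x : Gamma) (s t : seq Gamma) :
  (if t is y :: _ then y != x else true) ->
  size (Delta (x :: s) t) = (size s).+1 + size t.
Proof.
move=> Ht; rewrite DeltaE /= inv_cons RR_rcons.
have -> : fstep (i1 (x, true)) (fg_of t) = (x, false) :: fg_of t.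
  case: t Ht => //= y t Hy. by rewrite /i1 /= (negbTE Hy).
rewrite RR_neg //.
  by rewrite size_cat /= /fg_inv /fg_of size_rev !size_map addnS.
rewrite /fg_inv all_rev all_map /fg_of all_map. by apply/allP.
Qed.
End FG.

Section Runs.
Variables (Q Sigma Gamma : finType) (T : transducer Q Sigma Gamma).
Notation run := (run T).
Notation tedge := (tedge T).

Lemma run_cat p u y q u' y' r : run p u y q -> run q u' y' r -> run p (u ++ u') (y ++ y') r.
Proof.
elim=> [//|{}p a v q0 {}u w r0 He _ IH] H /=.
rewrite -catA; apply: run_cons He (IH H).
Qed.

Lemma run_snoc p u y q a v r : run p u y q -> (q, a, v, r) \in tE T -> run p (rcons u a) (y ++ v) r.
Proof.
move=> H He; rewrite -cats1; apply: run_cat H _.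
rewrite -[v]cats0; apply: run_cons He (run_nil _ _).
Qed.

Lemma run_connect p u y q : run p u y q -> connect tedge p q.
Proof.
elim=> [p0|p0 a v q0 {}u w r He _ IH]; first exact: connect0.
apply: connect_trans IH; apply: connect1.
by apply/hasP; exists (p0, a, v, q0) => //=; rewrite !eqxx.
Qed.

Lemma connect_run p q : connect tedge p q -> exists u y, run p u y q.
Proof.
move/connectP=> [s Hs ->] {q}.
elim: s p Hs => [|r s IH] p /=; first by exists [::], [::]; constructor.
case/andP=> /hasP[e He /andP[/eqP E1 /eqP E2]] /IH [u [y Hr]].
exists (e.1.1.2 :: u), (e.1.2 ++ y); apply: run_cons Hr.
by rewrite -E1 -E2; case: e He {E1 E2} => [[[]]].
Qed.

Definition Mx := \max_(e <- tE T) size e.1.2.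

Lemma run_size p u y q : run p u y q -> size y <= Mx * size u.
Proof.
elim=> [//|p0 a v q0 {}u w r He _ IH] /=.
rewrite size_cat mulnS leq_add //.
by have := @leq_bigmax_seq _ (tE T) xpredT (fun e : Q * Sigma * seq Gamma * Q => size e.1.2) _ He isT.
Qed.

Inductive prun : Q -> Q -> seq Sigma -> seq Gamma -> seq Gamma -> Q -> Q -> Prop :=
| prun_nil p q : prun p q [::] [::] [::] p q
| prun_cons p q a v1 v2 p' q' u w1 w2 r s :
    (p, a, v1, p') \in tE T -> (q, a, v2, q') \in tE T -> prun p' q' u w1 w2 r s ->
    prun p q (a :: u) (v1 ++ w1) (v2 ++ w2) r s.

Lemma run2_prun p u y1 r : run p u y1 r -> forall q y2 s, run q u y2 s -> prun p q u y1 y2 r s.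
Proof.
elim=> [p0|p0 a v q0 {}u w r0 He _ IH] q y2 s H.
  inversion H; subst; constructor.
inversion H as [|x1 x2 x3 x4 x5 x6 x7 He' Hr']; subst.
by apply: prun_cons He He' (IH _ _ _ Hr').
Qed.

Lemma prun_run1 p q u y1 y2 r s : prun p q u y1 y2 r s -> run p u y1 r.
Proof. elim=> [p0 q0|p0 q0 a v1 v2 p' q' {}u w1 w2 r0 s0 H1 H2 _ IH]; [exact: run_nil | exact: run_cons H1 IH]. Qed.
Lemma prun_run2 p q u y1 y2 r s : prun p q u y1 y2 r s -> run q u y2 s.
Proof. elim=> [p0 q0|p0 q0 a v1 v2 p' q' {}u w1 w2 r0 s0 H1 H2 _ IH]; [exact: run_nil | exact: run_cons H2 IH]. Qed.

Lemma prun_cat p q u y1 y2 r s u' y1' y2' r' s' :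
  prun p q u y1 y2 r s -> prun r s u' y1' y2' r' s' ->
  prun p q (u ++ u') (y1 ++ y1') (y2 ++ y2') r' s'.
Proof.
elim=> [//|p0 q0 a v1 v2 p' q' {}u w1 w2 r0 s0 H1 H2 _ IH] H /=.
rewrite -!catA; exact: prun_cons H1 H2 (IH H).
Qed.

Definition ploop p q u y1 y2 r s :=
  exists c1 c2 u1 v u2 a1 a2 b1 b2 d1 d2,
  [/\ v != [::], u = u1 ++ v ++ u2, y1 = a1 ++ b1 ++ d1, y2 = a2 ++ b2 ++ d2 &
   [/\ prun p q u1 a1 a2 c1 c2, prun c1 c2 v b1 b2 c1 c2 & prun c1 c2 u2 d1 d2 r s]].

Lemma prun_loop_or p q u y1 y2 r s : prun p q u y1 y2 r s ->
  ploop p q u y1 y2 r s \/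
  exists L : seq (Q * Q), [/\ uniq L, size L = (size u).+1 &
    forall c, c \in L -> exists u1 u2 a1 a2 d1 d2,
      [/\ u = u1 ++ u2, y1 = a1 ++ d1, y2 = a2 ++ d2,
          prun p q u1 a1 a2 c.1 c.2 & prun c.1 c.2 u2 d1 d2 r s]].
Proof.
elim=> [p0 q0|p0 q0 a v1 v2 p' q' {}u w1 w2 r0 s0 H1 H2 Hp IH].
  right; exists [:: (p0, q0)]; split => // c; rewrite inE => /eqP -> /=.
  by exists [::], [::], [::], [::], [::], [::]; split => //; constructor.
case: IH => [[c1 [c2 [u1 [v [u2 [a1 [a2 [b1 [b2 [d1 [d2 [Hv Eu E1 E2 [P1 P2 P3]]]]]]]]]]]]]|[L [UL SL HL]]].
  left; exists c1, c2, (a :: u1), v, u2, (v1 ++ a1), (v2 ++ a2), b1, b2, d1, d2.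
  split => //; first by rewrite Eu.
  - by rewrite E1 -!catA.
  - by rewrite E2 -!catA.
  split => //; exact: prun_cons H1 H2 P1.
case: (boolP ((p0, q0) \in L)) => Hin.
  have [u1 [u2 [a1 [a2 [d1 [d2 [Eu E1 E2 P1 P2]]]]]]] := HL _ Hin.
  left; exists p0, q0, [::], (a :: u1), u2, [::], [::], (v1 ++ a1), (v2 ++ a2), d1, d2.
  split => //; first by rewrite Eu.
  - by rewrite E1 -!catA.
  - by rewrite E2 -!catA.
  split => //; first constructor.
  exact: prun_cons H1 H2 P1.
right; exists ((p0, q0) :: L); split => /=; first by rewrite Hin UL.
  by rewrite SL.
move=> c; rewrite inE => /orP[/eqP ->|Hc].
  exists [::], (a :: u), [::], [::], (v1 ++ w1), (v2 ++ w2); split => //; first constructor.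
  exact: prun_cons H1 H2 Hp.
have [u1 [u2 [a1 [a2 [d1 [d2 [Eu E1 E2 P1 P2]]]]]]] := HL _ Hc.
exists (a :: u1), u2, (v1 ++ a1), (v2 ++ a2), d1, d2; split => //.
- by rewrite Eu.
- by rewrite E1 -!catA.
- by rewrite E2 -!catA.
exact: prun_cons H1 H2 P1.
Qed.

Lemma prun_loop p q u y1 y2 r s : prun p q u y1 y2 r s -> #|{: Q * Q}| <= size u ->
  ploop p q u y1 y2 r s.
Proof.
move=> /prun_loop_or [//|[L [UL SL _]]] Hs.
have := max_card (mem L); rewrite (card_uniqP UL) SL.
by rewrite ltnNge Hs.
Qed.
End Runs.

Section Delay.
Variables (Q Sigma Gamma : finType) (T : transducer Q Sigma Gamma).
Hypothesis WT : weak_twinning T.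
Notation N := #|{: Q * Q}|.
Definition Dm := (Mx T * N) + (Mx T * N).

Lemma delay_bound n : forall u, size u <= n -> forall q0 y1 y2 p q,
  prun T q0 q0 u y1 y2 p q -> connect (tedge T) p q0 -> size (Delta y1 y2) <= Dm.
Proof.
elim: n => [|n IH] u Hu q0 y1 y2 p q Hp Hc.
- move: Hu; rewrite leqn0 => /nilP Eu; subst u.
  inversion Hp; subst. rewrite /Delta /=. by [].
case: (leqP N (size u)) => HN.
  have [c1 [c2 [u1 [v [u2 [a1 [a2 [b1 [b2 [d1 [d2 [Hv Eu E1 E2 [P1 P2 P3]]]]]]]]]]]]] := prun_loop Hp HN.
  have Hcut := prun_cat P1 P3.
  have Hsz : size (u1 ++ u2) <= n.
    move: Hu; rewrite Eu !size_cat. case: v Hv {P2 Eu} => //= x v _. lia.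
  have := IH _ Hsz _ _ _ _ _ Hcut Hc.
  suff -> : Delta y1 y2 = Delta (a1 ++ d1) (a2 ++ d2) by [].
  rewrite E1 E2 !catA; apply: Delta_suf.
  have Hc1 : connect (tedge T) c1 q0.
    apply: connect_trans Hc; exact: run_connect (prun_run1 P3).
  have [w [o Hw]] := connect_run Hc1.
  have := WT (run_cat Hw (prun_run1 P1)) (prun_run1 P2) (run_cat Hw (prun_run2 P1)) (prun_run2 P2).
  by rewrite !Delta_pre -!catA !Delta_pre => ->.
apply: leq_trans (size_Delta_le _ _) _.
have L1 := run_size (prun_run1 Hp); have L2 := run_size (prun_run2 Hp).
rewrite /Dm; apply: leq_add.
  apply: leq_trans L1 _; rewrite leq_mul2l ltnW ?orbT //.
apply: leq_trans L2 _; rewrite leq_mul2l ltnW ?orbT //.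
Qed.
End Delay.

Section Lcp.
Variable Gamma : finType.
Implicit Types v w c : seq Gamma.

Lemma lcp2_l v w : prefix (lcp2 v w) v.
Proof.
elim: v w => [|a v IH] [|b w] //=; case: ifP => // /eqP ->; by rewrite eqxx IH.
Qed.
Lemma lcp2_r v w : prefix (lcp2 v w) w.
Proof.
elim: v w => [|a v IH] [|b w] //=; case: ifP => // /eqP ->; by rewrite eqxx IH.
Qed.
Lemma lcp2_max c v w : prefix c v -> prefix c w -> prefix c (lcp2 v w).
Proof.
elim: c v w => [|x c IH] [|a v] [|b w] //=; first by rewrite prefix0s.
case/andP=> /eqP E1 H1; case/andP=> /eqP E2 H2; subst.
by rewrite eqxx /= eqxx IH.
Qed.

Lemma foldl_lcp_pref ws acc : prefix (foldl (@lcp2 Gamma) acc ws) acc /\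
  forall w, w \in ws -> prefix (foldl (@lcp2 Gamma) acc ws) w.
Proof.
elim: ws acc => [|w ws IH] acc /=; first by split; [exact: prefix_refl|].
have [H1 H2] := IH (lcp2 acc w); split.
  exact: prefix_trans H1 (lcp2_l _ _).
move=> x; rewrite inE => /orP[/eqP ->|Hx]; last exact: H2.
exact: prefix_trans H1 (lcp2_r _ _).
Qed.

Lemma foldl_lcp_max c ws acc : prefix c acc -> (forall w, w \in ws -> prefix c w) ->
  prefix c (foldl (@lcp2 Gamma) acc ws).
Proof.
elim: ws acc => [|w ws IH] acc //= H1 H2.
apply: IH; last by move=> x Hx; apply: H2; rewrite inE Hx orbT.
by apply: lcp2_max => //; apply: H2; rewrite inE eqxx.
Qed.

Lemma lcp_pref ws w : w \in ws -> prefix (lcp ws) w.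
Proof.
case: ws => [|x ws] //=; rewrite inE => /orP[/eqP ->|Hw].
  exact: (foldl_lcp_pref ws x).1.
exact: (foldl_lcp_pref ws x).2.
Qed.

Lemma lcp_max c ws : ws != [::] -> (forall w, w \in ws -> prefix c w) -> prefix c (lcp ws).
Proof.
case: ws => [|x ws] //= _ H; apply: foldl_lcp_max.
  by apply: H; rewrite inE eqxx.
by move=> w Hw; apply: H; rewrite inE Hw orbT.
Qed.
End Lcp.
Local Open Scope fset_scope.

Section WS.
Variables (Q Sigma Gamma : finType) (T : transducer Q Sigma Gamma).
Notation dst := (dstate Q Gamma).

Lemma memR (U : dst) s x : x \in R_ T U s <->
  exists pu e, [/\ pu \in U, e \in tE T, e.1.1.1 = pu.1, e.1.1.2 = s & x = (e.2, pu.2 ++ e.1.2)].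
Proof.
split.
  case/imfsetP=> y /= Hy ->; case/allpairsPdep: Hy => pu [e [H1 H2 ->]].
  move: H2; rewrite mem_filter => /andP[/andP[/eqP E1 /eqP E2] H2].
  by exists pu, e.
case=> pu [e [H1 H2 E1 E2 ->]]; apply/imfsetP; exists (e.2, pu.2 ++ e.1.2) => //=.
apply/allpairsPdep; exists pu, e; split => //.
by rewrite mem_filter H2 E1 E2 !eqxx.
Qed.

Lemma memP (U : dst) s z : z \in P_ T U s <->
  exists2 x, x \in R_ T U s /\ prefix (w_ T U s) x.2 & z = (x.1, drop (size (w_ T U s)) x.2).
Proof.
split.
  by case/imfsetP=> x /= /andP[H1 H2] ->; exists x.
case=> x [H1 H2] ->; apply/imfsetP; exists x => //=; rewrite inE; apply/andP; split => //.
Qed.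

Lemma rankP (U : dst) X : X \in rank T U <->
  exists z r, [/\ z \in U, connect (tedge T) z.1 r & X = scc T r].
Proof.
split.
  case/imsetP=> r; rewrite inE => /existsP [x Hx] ->.
  by exists (val x), r; split => //; exact: (valP x).
case=> z [r [Hz Hc ->]]; apply/imsetP; exists r => //.
by rewrite inE; apply/existsP; exists (FSetSub Hz).
Qed.

Lemma memR' (U : dst) s x : x \in R_ T U s ->
  exists2 pu, pu \in U & (pu.1, s, drop (size pu.2) x.2, x.1) \in tE T /\ x.2 = pu.2 ++ drop (size pu.2) x.2.
Proof.
case/memR=> pu [e [H1 H2 E1 E2 ->]]; exists pu => //=.
rewrite drop_size_cat //; split => //.
by rewrite -E1 -E2; case: e H2 {E1 E2} => [[[]]].
Qed.

Lemma rank_sub (U : dst) s : rank T (P_ T U s) \subset rank T U.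
Proof.
apply/subsetP => X /rankP [z [r [Hz Hc ->]]].
case/memP: Hz => x [Hx _] Ez; case/memR': Hx => pu Hpu [He _].
apply/rankP; exists pu, r; split => //.
apply: connect_trans Hc; rewrite Ez /=; apply: connect1.
by apply/hasP; exists (pu.1, s, drop (size pu.2) x.2, x.1) => //=; rewrite !eqxx.
Qed.

Definition NCL (U : dst) := forall a : Gamma, exists2 z, z \in U & (if z.2 is b :: _ then b != a else true).
Definition Inv (U : dst) := exists q0 u W,
  [/\ forall z, z \in U -> run T q0 u (W ++ z.2) z.1, scc T q0 \in rank T U &
      ((forall z, z \in U -> z.2 = [::]) \/ NCL U)].

Lemma NCL_P (U : dst) s : (exists z, z \in P_ T U s) -> NCL (P_ T U s).
Proof.
move=> [z0 Hz0] a.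
set p := fun z : Q * seq Gamma => if z.2 is b :: _ then b != a else true.
case: (boolP (has p (enum_fset (P_ T U s)))) => [/hasP [z Hz Hp]|Hn]; first by exists z => //; move: Hp; rewrite /p; case: (z.2).
exfalso.
have Hall : forall z, z \in P_ T U s -> exists t, z.2 = a :: t.
  move=> z Hz; have := hasPn Hn z Hz; rewrite /p.
  case: z Hz => q [|b t] //= _; by rewrite negbK => /eqP ->; exists t.
case/memP: Hz0 => x0 [Hx0 _] _.
have : prefix (w_ T U s ++ [:: a]) (w_ T U s).
  apply: lcp_max.
    have Hm : x0.2 \in [seq x.2 | x <- enum_fset (R_ T U s)] by apply/mapP; exists x0.
    by apply/eqP => E; rewrite E in Hm.
  move=> y /mapP [x Hx ->].
  have Hpre : prefix (w_ T U s) x.2 by apply: lcp_pref; apply/mapP; exists x.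
  have [t Ht] := Hall (x.1, drop (size (w_ T U s)) x.2) (proj2 (memP _ _ _) (ex_intro2 _ _ x (conj Hx Hpre) erefl)).
  move: Hpre; rewrite prefixE => /eqP Et.
  move: Ht => /= Ht.
  rewrite -(cat_take_drop (size (w_ T U s)) x.2) Et Ht.
  by rewrite -[a :: t]cat1s catA prefix_prefix.
move/size_prefix; rewrite size_cat /= addn1 ltnn //.
Qed.

Lemma Inv_step (U U'' : dst) s v : Inv U -> Wbar_trans T U s v U'' -> Inv U''.
Proof.
move=> [q0 [u [W [Hr Hrk Hd]]]] [U' [[_ ->]]].
case: ifP => Hpr.
  case=> q [w [Hq Ev ->]].
  exists q, [::], [::]; split.
  - by move=> z; rewrite inE => /eqP ->; constructor.
  - by apply/rankP; exists (q, [::]), q; split; rewrite ?inE ?connect0.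
  - by left => z; rewrite inE => /eqP ->.
case=> Ev ->.
have Erk : rank T (P_ T U s) = rank T U.
  apply/eqP; rewrite eqEsubset rank_sub /=.
  by move: Hpr; rewrite properE rank_sub /= => /negbFE.
exists q0, (rcons u s), (W ++ w_ T U s); split.
- move=> z /memP [x [Hx Hpre] ->] /=.
  case/memR': Hx => pu Hpu [He Ex].
  have := run_snoc (Hr _ Hpu) He.
  suff -> : (W ++ w_ T U s) ++ drop (size (w_ T U s)) x.2 = (W ++ pu.2) ++ drop (size pu.2) x.2 by [].
  rewrite -!catA -Ex.
  by move: Hpre; rewrite prefixE => /eqP Et; rewrite -{2}(cat_take_drop (size (w_ T U s)) x.2) Et.
- by rewrite Erk.
- right; apply: NCL_P.
  by move: Hrk; rewrite -Erk => /rankP [z [r [Hz _ _]]]; exists z.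
Qed.

Lemma Inv_U0 i0 : tI T = [set i0] -> Inv (U0 T).
Proof.
move=> HI.
have Hm : forall z, z \in U0 T -> z = (i0, [::]).
  move=> z /imfsetP [y /= /mapP [i Hi ->] ->].
  by move: Hi; rewrite mem_enum HI inE => /eqP ->.
have Hin : (i0, [::]) \in U0 T.
  by apply/imfsetP; exists (i0, [::]) => //; apply/mapP; exists i0; rewrite // mem_enum HI inE.
exists i0, [::], [::]; split.
- by move=> z /Hm ->; constructor.
- by apply/rankP; exists (i0, [::]), i0; split; rewrite ?connect0.
- by left => z /Hm ->.
Qed.

Lemma Inv_run (U U' : dst) u w : mrun (Wbar T) U u w U' -> Inv U -> Inv U'.
Proof.
elim=> [//|p a v q {}u {}w r _ He _ IH] H.
exact: IH (Inv_step H He).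
Qed.

Lemma Inv_bound (U : dst) : weak_twinning T -> Inv U ->
  forall z, z \in U -> size z.2 <= Dm T + Dm T.
Proof.
move=> WT [q0 [u [W [Hr Hrk Hd]]]].
case/rankP: Hrk => zp [r [Hzp Hc Er]].
have Hc' : connect (tedge T) zp.1 q0.
  apply: connect_trans Hc _.
  have : q0 \in scc T r by rewrite -Er inE connect0.
  by rewrite inE => /andP[].
have Hb : forall z, z \in U -> size (Delta zp.2 z.2) <= Dm T.
  move=> z Hz.
  have := @delay_bound _ _ _ T WT (size u) u (leqnn _) q0 _ _ _ _
    (run2_prun (Hr _ Hzp) (Hr _ Hz)) Hc'.
  by rewrite Delta_pre.
case: Hd => [Hn z /Hn ->|Hn] //.
have Hp : size zp.2 <= Dm T.
  case E: zp.2 => [|a t] //.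
  case: (Hn a) => z' Hz' Hh.
  have := Hb _ Hz'; rewrite E size_Delta_ex; last by move: Hh; case: (z'.2).
  move=> H; apply: leq_trans H; exact: leq_addr.
move=> z Hz; apply: leq_trans (size_Delta_ge zp.2 z.2) _.
exact: leq_add (Hb _ Hz) Hp.
Qed.
End WS.
Local Open Scope fset_scope.

Lemma mrun_cat (S : Type) (Sigma Gamma : eqType) (M : mtransducer S Sigma Gamma) a u w b u' w' c :
  mrun M a u w b -> mrun M b u' w' c -> mrun M a (u ++ u') (w ++ w') c.
Proof.
elim=> [//|p x v q {}u {}w r Hp He _ IH] H /=.
rewrite -catA; exact: mrun_cons Hp He (IH H).
Qed.

Section Eq.
Variables (Q Sigma Gamma : finType) (T : transducer Q Sigma Gamma).
Notation dst := (dstate Q Gamma).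

Lemma memP_back (U : dst) s z : z \in P_ T U s ->
  exists2 pu, pu \in U & exists v', (pu.1, s, v', z.1) \in tE T /\ pu.2 ++ v' = w_ T U s ++ z.2.
Proof.
case/memP=> x [Hx Hpre] ->; case/memR': Hx => pu Hpu [He Ex].
exists pu => //; exists (drop (size pu.2) x.2); split => //=.
rewrite -Ex; move: Hpre; rewrite prefixE => /eqP Et.
by rewrite -{1}(cat_take_drop (size (w_ T U s)) x.2) Et.
Qed.

Lemma step_sound (U U'' : dst) s v z'' : Wbar_trans T U s v U'' -> z'' \in U'' ->
  exists2 z, z \in U & exists v', (z.1, s, v', z''.1) \in tE T /\ z.2 ++ v' = v ++ z''.2.
Proof.
move=> [U' [[_ ->]]]; case: ifP => _.
  case=> q [w [Hq -> ->]]; rewrite inE => /eqP ->.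
  case/memP_back: Hq => pu Hpu [v' [He Ev]]; exists pu => //; exists v'.
  by rewrite /= cats0.
case=> -> -> Hz; exact: memP_back Hz.
Qed.

Lemma run_sound (U U' : dst) u w : mrun (Wbar T) U u w U' -> forall z', z' \in U' ->
  exists2 z, z \in U & exists o, run T z.1 u o z'.1 /\ z.2 ++ o = w ++ z'.2.
Proof.
elim=> [p _|p a v q {}u {}w r _ He _ IH] z' Hz'.
  by exists z' => //; exists [::]; split; [constructor|rewrite cats0].
case: (IH _ Hz') => zq Hzq [o [Hr Eo]].
case: (step_sound He Hzq) => z Hz [v' [He' Ev]].
exists z => //; exists (v' ++ o); split; first exact: run_cons He' Hr.
by rewrite catA Ev -!catA Eo.
Qed.

Lemma step_complete (U : dst) z s v' q' : (z.1, s, v', q') \in tE T -> z \in U ->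
  exists v U'' z'', [/\ Wbar_trans T U s v U'', z'' \in U'', z''.1 = q' & z.2 ++ v' = v ++ z''.2].
Proof.
move=> He Hz.
set x := (q', z.2 ++ v').
have Hx : x \in R_ T U s by apply/memR; exists z, (z.1, s, v', q').
have Hpre : prefix (w_ T U s) x.2 by apply: lcp_pref; apply/mapP; exists x.
have HP : (q', drop (size (w_ T U s)) x.2) \in P_ T U s by apply/memP; exists x.
have Ex : x.2 = w_ T U s ++ drop (size (w_ T U s)) x.2.
  by move: Hpre; rewrite prefixE => /eqP Et; rewrite -{1}(cat_take_drop (size (w_ T U s)) x.2) Et.
case Hpr : (rank T (P_ T U s) \proper rank T U).
  exists (w_ T U s ++ drop (size (w_ T U s)) x.2), [fset (q', [::] : seq Gamma)], (q', [::]).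
  split => //; first (exists (P_ T U s); split => //; rewrite Hpr; by exists q', (drop (size (w_ T U s)) x.2)).
    by rewrite inE.
  by rewrite cats0 -Ex.
exists (w_ T U s), (P_ T U s), (q', drop (size (w_ T U s)) x.2); split => //.
by exists (P_ T U s); split => //; rewrite Hpr.
Qed.

Lemma run_complete p u o q : run T p u o q -> forall (U : dst) z, z \in U -> z.1 = p ->
  exists U' w z', [/\ mrun (Wbar T) U u w U', z' \in U', z'.1 = q & z.2 ++ o = w ++ z'.2].
Proof.
elim=> [p0|p0 a v q0 {}u w r He _ IH] U z Hz Ez.
  by exists U, [::], z; split => //; [constructor|rewrite cats0].
rewrite -Ez in He.
case: (step_complete He Hz) => v0 [U1 [z1 [Ht Hz1 Ez1 Ev]]].
case: (IH _ _ Hz1 Ez1) => U' [w' [z' [Hr Hz' Ez' Ew]]].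
exists U', (v0 ++ w'), z'; split => //; first (apply: mrun_cons Hr; [done|exact: Ht]).
by rewrite catA Ev -!catA Ew.
Qed.

Lemma mrun_untrim (a b : dst) u w : mrun (W T) a u w b -> mrun (Wbar T) a u w b.
Proof.
elim=> [p _|p x v q {}u {}w r _ [_ _ He] _ IH]; first exact: mrun_nil.
exact: mrun_cons He IH.
Qed.

Lemma mrun_trim (a b : dst) u w : mrun (Wbar T) a u w b ->
  (exists u0 w0, mrun (Wbar T) (U0 T) u0 w0 a) -> dfinal T b -> mrun (W T) a u w b.
Proof.
move=> Hr; have := Hr.
elim: Hr => [p _|p x v q {}u {}w r Hp He Hr IH] Hr0 [u0 [w0 H0]] Hf.
  apply: mrun_nil; exists (U0 T), p, u0, w0, [::], [::]; split => //; exact: mrun_nil.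
have Tp : mtrim_state (Wbar T) p by exists (U0 T), r, u0, w0, (x :: u), (v ++ w).
have H0q : mrun (Wbar T) (U0 T) (u0 ++ [:: x]) (w0 ++ v) q.
  apply: mrun_cat H0 _; rewrite -[v]cats0; apply: mrun_cons He _ => //; exact: mrun_nil.
have Tq : mtrim_state (Wbar T) q by exists (U0 T), r, (u0 ++ [:: x]), (w0 ++ v), u, w.
apply: mrun_cons => //; last (apply: IH => //; by exists (u0 ++ [:: x]), (w0 ++ v)).
by split.
Qed.

Lemma U0_mem z : z \in U0 T -> z.1 \in tI T /\ z.2 = [::].
Proof. by case/imfsetP=> y /= /mapP [i Hi ->] ->; rewrite mem_enum in Hi. Qed.

Lemma U0_in i : i \in tI T -> (i, [::]) \in U0 T.
Proof. by move=> Hi; apply/imfsetP; exists (i, [::]) => //; apply/mapP; exists i; rewrite ?mem_enum. Qed.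

Lemma W_equiv u out : mrealises (W T) u out <-> realises T u out.
Proof.
split.
  case=> i [t [w [x [[Ei _] [Hf _] Hr Hx ->]]]].
  rewrite Ei in Hr; have Hr' := mrun_untrim Hr.
  case/mapP: Hx => z; rewrite mem_filter => /andP[HzF Hz] ->.
  case: (run_sound Hr' Hz) => z0 Hz0 [o [Hro Eo]].
  case: (U0_mem Hz0) => Hi E0; rewrite E0 /= in Eo.
  exists z0.1, z.1, o; split => //.
  by rewrite Eo catA.
case=> i [t [o [Hi Ht Hr ->]]].
case: (run_complete Hr (U0_in Hi) erefl) => U' [w [z' [Hr' Hz' Ez' Ew]]].
have Hf : dfinal T U' by apply/hasP; exists z' => //; rewrite Ez'.
have Hpre : exists u0 w0, mrun (Wbar T) (U0 T) u0 w0 (U0 T) by exists [::], [::]; exact: mrun_nil.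
have TU0 : mtrim_state (Wbar T) (U0 T) by exists (U0 T), U', [::], [::], u, w; split => //; exact: mrun_nil.
have TU' : mtrim_state (Wbar T) U' by exists (U0 T), U', u, w, [::], [::]; split => //; exact: mrun_nil.
exists (U0 T), U', w, (z'.2 ++ tf T t); split => //.
- exact: mrun_trim Hr' Hpre Hf.
- by apply/mapP; exists z'; rewrite ?mem_filter ?Ez' ?Ht.
- by rewrite /= in Ew; rewrite Ew -catA.
Qed.
End Eq.
Local Open Scope fset_scope.

Fixpoint powl (X : Type) (s : seq X) : seq (seq X) :=
  if s is x :: s' then [seq x :: l | l <- powl s'] ++ powl s' else [:: [::]].

Lemma filter_powl (X : eqType) (p : pred X) s : filter p s \in powl s.
Proof.
elim: s => [|x s IH] //=.
rewrite mem_cat; case: (p x); first by rewrite map_f.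
by rewrite IH orbT.
Qed.

Section Fin.
Variables (Q Sigma Gamma : finType) (T : transducer Q Sigma Gamma).
Notation dst := (dstate Q Gamma).

Fixpoint words n : seq (seq Gamma) :=
  if n is m.+1 then [::] :: [seq a :: w | a <- enum Gamma, w <- words m] else [:: [::]].

Lemma words_in n x : size x <= n -> x \in words n.
Proof.
elim: n x => [|n IH] [|a x] //= Hs.
rewrite inE; apply/orP; right; apply/allpairsPdep; exists a, x; split => //.
  by rewrite mem_enum.
exact: IH.
Qed.

Definition Kb := (Dm T + Dm T)%N.
Definition Bset : seq (Q * seq Gamma) := [seq (q, x) | q <- enum Q, x <- words Kb].
Definition sQ : seq dst := [seq [fset y | y in l] | l <- powl Bset].
Definition cand (p : dst) a := w_ T p a :: [seq w_ T p a ++ z.2 | z <- enum_fset (P_ T p a)].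
Definition sE : seq (dst * Sigma * seq Gamma * dst) :=
  flatten [seq flatten [seq flatten [seq [seq (p, a, v, q) | q <- sQ] | v <- cand p a] | a <- enum Sigma] | p <- sQ].

Hypothesis WT : weak_twinning T.
Hypothesis HI : exists i0, tI T = [set i0].

Lemma trim_sQ (U : dst) : mtrim_state (Wbar T) U -> U \in sQ.
Proof.
case=> i [t [u1 [w1 [u2 [w2 [Ei _ Hr _]]]]]].
case: HI => i0 Hi0.
have Hinv : Inv T U by apply: (@Inv_run _ _ _ T _ _ _ _ Hr); move: Ei => /= ->; exact: Inv_U0 Hi0.
have Hb := Inv_bound WT Hinv.
have -> : U = [fset y | y in filter (mem U) Bset].
  apply/fsetP => y; apply/idP/imfsetP.
    move=> Hy; exists y => //=; rewrite mem_filter; apply/andP; split; first exact: Hy.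
    apply/allpairsPdep; exists y.1, y.2; split; rewrite ?mem_enum //; last by case: y Hy.
    exact: words_in (Hb _ Hy).
  by case=> y' /=; rewrite mem_filter => /andP[H _] ->.
by apply: map_f; exact: filter_powl.
Qed.

Lemma finite : mfinite (W T).
Proof.
exists sQ, sE; split; first exact: trim_sQ.
move=> p a v q [Tp Tq Ht].
apply/flatten_mapP; exists p; first exact: trim_sQ.
apply/flatten_mapP; exists a; first by rewrite mem_enum.
apply/flatten_mapP; exists v; last by apply: map_f; exact: trim_sQ.
case: Ht => U' [[_ EU] H]; move: H; case: ifP => _.
  case=> q' [w [Hq -> _]]; rewrite inE; apply/orP; right.
  by apply/mapP; exists (q', w) => //; rewrite -EU.
by case=> -> _; rewrite inE eqxx.
Qed.
End Fin.

Theorem proposition2 (Q Sigma Gamma : finType) (T : transducer Q Sigma Gamma) :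
  is_trim T -> (exists i0 : Q, tI T = [set i0]) ->
  (forall (u : seq Sigma) (out : seq Gamma), mrealises (W T) u out <-> realises T u out) /\
  (weak_twinning T -> mfinite (W T)).
Proof.
move=> _ HI; split; first exact: W_equiv.
move=> WT; exact: finite WT HI.
Qed.
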